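(* Let $A$ and $Z$ be $n\times n$ complex matrices with $A$ positive semidefinite and $Z$ positive definite with largest eigenvalue $a$ and smallest eigenvalue $b$. Then $$\Vert AZ\Vert_\infty \le \frac{a+b}{2\sqrt{ab}}\,\rho(AZ) \quad\text{and}\quad \Vert AZ\Vert_1 \le \frac{a+b}{2\sqrt{ab}}\,{\rm Tr}\,AZ.$$
   Context: $\Vert\cdot\Vert_\infty$ is the operator norm (largest singular value), $\Vert\cdot\Vert_1$ is the trace norm (sum of singular values), $\rho(\cdot)$ is the spectral radius, and ${\rm Tr}$ is the trace. *)

(* Defs.v *)
From HB Require Import structures.
From mathcomp Require Import all_boot all_order all_algebra.
From mathcomp Require Export spectral.
From mathcomp Require Export complex.
Set Implicit Arguments. Unset Strict Implicit. Unset Printing Implicit Defensive.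
Import Order.TTheory GRing.Theory Num.Theory.
Local Open Scope ring_scope.
Local Open Scope sesquilinear_scope.

(* Matrix notions over an algebraically closed numeric field C
   (instantiated in the statement with C = R[i], R real closed). *)
Section Defs.
Context {C : numClosedFieldType}.

(* Conjugate transpose M^* is M ^t* (spectral.v). *)
Definition hermitian_mx n (M : 'M[C]_n) : Prop := M ^t* = M.

Definition psd_mx n (M : 'M[C]_n) : Prop :=
  hermitian_mx M /\ forall v : 'rV[C]_n, 0 <= (v *m M *m v ^t*) 0 0.

Definition pd_mx n (M : 'M[C]_n) : Prop :=
  hermitian_mx M /\ forall v : 'rV[C]_n, v != 0 -> 0 < (v *m M *m v ^t*) 0 0.

(* the eigenvalues of M, listed with algebraic multiplicity
   (the roots of the characteristic polynomial) *)
Definition eigvals n (M : 'M[C]_n) : seq C :=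
  sval (closed_field_poly_normal (char_poly M)).

Definition singvals n (M : 'M[C]_n) : seq C :=
  [seq sqrtC z | z <- eigvals (M ^t* *m M)].

Definition opnorm n (M : 'M[C]_n) : C := \big[Num.max/0]_(s <- singvals M) s.

Definition tracenorm n (M : 'M[C]_n) : C := \sum_(s <- singvals M) s.

Definition specrad n (M : 'M[C]_n) : C := \big[Num.max/0]_(z <- eigvals M) `|z|.

End Defs.

(* Main.v *)
Require Import Defs.
From HB Require Import structures.
From mathcomp Require Import all_boot all_order all_algebra spectral complex.
From mathcomp Require Import ring.
Import Order.TTheory GRing.Theory Num.Theory.
Local Open Scope ring_scope.
Set Implicit Arguments. Unset Strict Implicit. Unset Printing Implicit Defensive.


Section Scal.
Local Open Scope sesquilinear_scope.
Variable C : numClosedFieldType.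

Lemma K2E (a b : C) : 0 < a -> 0 < b ->
  ((a + b) / (2 * sqrtC (a * b))) ^+ 2 = (a + b) ^+ 2 / (4 * (a * b)).
Proof.
move=> ha hb; rewrite expr_div_n exprMn sqrtCK; congr (_ / (_ * _)).
by rewrite -natrX.
Qed.

Lemma sc1 (a b rho t N Y x : C) : 0 < a -> 0 < b -> 0 <= rho -> 0 <= t -> 0 < N ->
  x * N <= (a + b) * rho * t - a * b * Y -> t ^+ 2 <= Y * N ->
  x <= ((a + b) / (2 * sqrtC (a * b)) * rho) ^+ 2.
Proof.
move=> ha hb hr ht hN h1 h2.
have hab : 0 < a * b by rewrite mulr_gt0.
rewrite exprMn K2E // -(ler_pM2r hN); apply: le_trans h1 _.
have hY : a * b * t ^+ 2 / N <= a * b * Y.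
  by rewrite ler_pdivrMr // -[a * b * Y * N]mulrA; apply: ler_wpM2l => //; apply: ltW.
apply: (@le_trans _ _ ((a + b) * rho * t - a * b * t ^+ 2 / N)).
  by rewrite lerD2l lerN2.
rewrite -subr_ge0.
have -> : (a + b) ^+ 2 / (4 * (a * b)) * rho ^+ 2 * N -
    ((a + b) * rho * t - a * b * t ^+ 2 / N) =
    ((a + b) * rho * N - 2 * (a * b) * t) ^+ 2 / (4 * (a * b) * N).
  field; rewrite ?mulf_neq0 ?gt_eqF ?lt0r_neq0 //.
apply: divr_ge0; last by rewrite !mulr_ge0 ?ltW.
rewrite -realEsqr.
exact: (rpredB (rpredM (rpredM (ger0_real (addr_ge0 (ltW ha) (ltW hb))) (ger0_real hr))
  (ger0_real (ltW hN))) (rpredM (rpredM (rpred_nat _ 2) (ger0_real (ltW hab))) (ger0_real ht))).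
Qed.

Lemma sc2 n (a b : C) (z w : 'I_n -> C) : 0 < a -> 0 < b ->
  (forall k, b <= z k) -> (forall k, z k <= a) -> (forall k, 0 <= w k) ->
  (\sum_k z k * w k) * (\sum_k w k / z k) <=
  ((a + b) / (2 * sqrtC (a * b))) ^+ 2 * (\sum_k w k) ^+ 2.
Proof.
move=> ha hb hzb hza hw.
have hab : 0 < a * b by rewrite mulr_gt0.
have hz k : 0 < z k by apply: lt_le_trans hb (hzb k).
set X := \sum_k z k * w k; set Y := \sum_k w k / z k; set W := \sum_k w k.
have X0 : 0 <= X by apply: sumr_ge0 => k _; rewrite mulr_ge0 // ltW.
have Y0 : 0 <= Y by apply: sumr_ge0 => k _; rewrite divr_ge0 // ltW.
have W0 : 0 <= W by apply: sumr_ge0.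
have h1 : X + a * b * Y <= (a + b) * W.
  rewrite /X /Y /W mulr_sumr mulr_sumr -big_split /=; apply: ler_sum => k _.
  rewrite -subr_ge0.
  have -> : (a + b) * w k - (z k * w k + a * b * (w k / z k)) =
     w k * (a - z k) * (z k - b) / z k.
    by field; rewrite gt_eqF.
  by rewrite divr_ge0 ?mulr_ge0 ?subr_ge0 // ltW.
have h2 : 4 * (a * b) * (X * Y) <= (X + a * b * Y) ^+ 2.
  rewrite -subr_ge0.
  have -> : (X + a * b * Y) ^+ 2 - 4 * (a * b) * (X * Y) = (X - a * b * Y) ^+ 2.
    by ring.
  by rewrite -realEsqr (rpredB (ger0_real X0)) // rpredM ?ger0_real // ltW.
have h3 : (X + a * b * Y) ^+ 2 <= ((a + b) * W) ^+ 2.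
  rewrite ler_pXn2r // nnegrE ?addr_ge0 ?mulr_ge0 // ?ltW //.
  by rewrite addr_gt0.
rewrite K2E // mulrAC ler_pdivlMr ?mulr_gt0 //.
rewrite mulrC; apply: le_trans h2 _; apply: le_trans h3 _.
by rewrite exprMn.
Qed.

End Scal.


Section Aux.
Local Open Scope sesquilinear_scope.
Variable C : numClosedFieldType.
Implicit Types (n : nat).

Lemma trC_mul m n p (X : 'M[C]_(m, n)) (Y : 'M[C]_(n, p)) :
  (X *m Y) ^t* = Y ^t* *m X ^t*.
Proof. by rewrite trmx_mul map_mxM. Qed.

Lemma unit_l n (V : 'M[C]_n) : V \is unitarymx -> V ^t* *m V = 1%:M.
Proof.
move=> hV; have := mulmxKtV (1%:M : 'M[C]_n) hV (erefl n).
by rewrite mul1mx.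
Qed.

Lemma unit_r n (V : 'M[C]_n) : V \is unitarymx -> V *m V ^t* = 1%:M.
Proof. by move/unitarymxP. Qed.

Lemma herm_normal n (M : 'M[C]_n) : M ^t* = M -> M \is normalmx.
Proof. by move=> h; apply/normalmxP; rewrite h. Qed.

Lemma spec_dec n (M : 'M[C]_n) : M ^t* = M ->
  M = (spectralmx M) ^t* *m diag_mx (spectral_diag M) *m spectralmx M.
Proof.
move=> h; have /orthomx_spectralP E := herm_normal h.
by rewrite {1}E invmx_unitary // spectral_unitarymx.
Qed.

Lemma quad_diag n (V : 'M[C]_n) (d : 'rV[C]_n) (u : 'rV[C]_n) :
  (u *m (V ^t* *m diag_mx d *m V) *m u ^t*) 0 0 =
  \sum_k d 0 k * `|(u *m V ^t*) 0 k| ^+ 2.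
Proof.
have -> : u *m (V ^t* *m diag_mx d *m V) *m u ^t* =
   (u *m V ^t*) *m diag_mx d *m (u *m V^t*) ^t*.
  by rewrite trC_mul trmxCK !mulmxA.
rewrite mul_mx_diag mxE; apply: eq_bigr => k _.
by rewrite !mxE normCK; ring.
Qed.

Lemma nrm_unit n (V : 'M[C]_n) (u : 'rV[C]_n) : V \is unitarymx ->
  (u *m u ^t*) 0 0 = \sum_k `|(u *m V ^t*) 0 k| ^+ 2.
Proof.
move=> hV; have := quad_diag V (const_mx 1) u.
rewrite diag_const_mx mulmx1 unit_l // mulmx1 => ->.
by apply: eq_bigr => k _; rewrite mxE mul1r.
Qed.

Lemma entry_rows m n p (X : 'M[C]_(m, n)) (M : 'M[C]_n) (Y : 'M[C]_(p, n)) i j :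
  (X *m M *m Y ^t*) i j = (row i X *m M *m (row j Y) ^t*) 0 0.
Proof.
rewrite !mxE; apply: eq_bigr => k _; rewrite !mxE; congr (_ * _).
by apply: eq_bigr => l _; rewrite !mxE.
Qed.

Lemma nrm_ge0 n (u : 'rV[C]_n) : 0 <= (u *m u ^t*) 0 0.
Proof. by rewrite -dotmxE dnorm_ge0. Qed.

Lemma nrm_gt0 n (u : 'rV[C]_n) : u != 0 -> 0 < (u *m u ^t*) 0 0.
Proof. by move=> h; rewrite -dotmxE dnorm_gt0. Qed.

End Aux.


Section Aux2.
Local Open Scope sesquilinear_scope.
Variable C : numClosedFieldType.
Implicit Types (n : nat).

Lemma eigvalsE n (M : 'M[C]_n) :
  char_poly M = \prod_(z <- eigvals M) ('X - z%:P).
Proof.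
rewrite /eigvals; case: closed_field_poly_normal => r /= {1}->.
by rewrite (monicP (char_poly_monic M)) scale1r.
Qed.

Lemma eig_in n (M : 'M[C]_n) x : eigenvalue M x -> x \in eigvals M.
Proof. by rewrite eigenvalue_root_char eigvalsE root_prod_XsubC. Qed.

Lemma in_eig n (M : 'M[C]_n) x : x \in eigvals M -> eigenvalue M x.
Proof. by rewrite eigenvalue_root_char eigvalsE root_prod_XsubC. Qed.

Lemma char_poly_conj n (V : 'M[C]_n) (D : 'M[C]_n) : V \is unitarymx ->
  char_poly (V ^t* *m D *m V) = char_poly D.
Proof.
move=> hV; rewrite /char_poly /char_poly_mx.
set U := map_mx polyC (V ^t*); set W := map_mx polyC V.
have UW : U *m W = 1%:M by rewrite -map_mxM unit_l // map_mx1.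
have WU : W *m U = 1%:M by rewrite -map_mxM unit_r // map_mx1.
have -> : 'X%:M - map_mx polyC (V ^t* *m D *m V) = U *m ('X%:M - map_mx polyC D) *m W.
  rewrite !map_mxM mulmxBr mulmxBl -/U -/W.
  by rewrite mul_mx_scalar -scalemxAl UW scalemx1.
rewrite !det_mulmx mulrC mulrA -det_mulmx WU det1 mul1r //.
Qed.

Lemma eig_perm n (V : 'M[C]_n) (d : 'rV[C]_n) : V \is unitarymx ->
  perm_eq (eigvals (V ^t* *m diag_mx d *m V)) [seq d 0 k | k <- enum 'I_n].
Proof.
move=> hV; apply: prod_XsubC_eq; rewrite -eigvalsE char_poly_conj //.
rewrite char_poly_trig ?diag_mx_is_trig // big_map big_enum /=.
by apply: eq_bigr => k _; rewrite mxE eqxx mulr1n.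
Qed.

End Aux2.


Section Aux3.
Local Open Scope sesquilinear_scope.
Variable C : numClosedFieldType.

Lemma max_le (x y c : C) : x <= c -> y <= c -> Num.max x y <= c.
Proof. by rewrite /Num.max /Order.max; case: ifP. Qed.

Lemma bmax_le (l : seq C) (c : C) : (forall s, s \in l -> s <= c) -> 0 <= c ->
  \big[Num.max/0]_(s <- l) s <= c.
Proof.
elim: l => [|y l IH] h c0; first by rewrite big_nil.
rewrite big_cons max_le //; first by apply: h; rewrite mem_head.
by apply: IH => // s hs; apply: h; rewrite in_cons hs orbT.
Qed.

Lemma bmax_ge0 (l : seq C) : 0 <= \big[Num.max/0]_(z <- l) `|z|.
Proof.
elim: l => [|y l IH]; first by rewrite big_nil.
rewrite big_cons /Num.max /Order.max; case: ifP => // _.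
Qed.

Lemma le_bmax (l : seq C) x : x \in l -> `|x| <= \big[Num.max/0]_(z <- l) `|z|.
Proof.
elim: l => [|y l IH] //; rewrite in_cons big_cons => /orP[/eqP->|hx].
  by rewrite /Num.max /Order.max; case: ifP => // /ltW.
have := IH hx; have := bmax_ge0 l; set R := \big[_/_]_(_ <- _) _ => R0 hxR.
rewrite /Num.max /Order.max; case: ifP => // h.
apply: le_trans hxR _.
by rewrite real_leNgt ?h // ger0_real.
Qed.

End Aux3.


Section Aux5.
Local Open Scope sesquilinear_scope.
Variable C : numClosedFieldType.
Implicit Types (n : nat).

Fact cd_key : unit. Proof. by []. Qed.
Definition cd n (V : 'M[C]_n) (d : 'rV[C]_n) := locked_with cd_key (V ^t* *m diag_mx d *m V).
Lemma cdE n (V : 'M[C]_n) (d : 'rV[C]_n) : cd V d = V ^t* *m diag_mx d *m V.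
Proof. by rewrite /cd unlock. Qed.

Lemma diag_mul n (d e : 'rV[C]_n) :
  diag_mx d *m diag_mx e = diag_mx (\row_k (d 0 k * e 0 k)).
Proof.
apply/matrixP => i j; rewrite mul_diag_mx !mxE.
by case: (i =P j) => [->|_]; rewrite ?mulr1n ?mulr0n ?mulr0.
Qed.

Lemma cd_mul n (V : 'M[C]_n) (d e : 'rV[C]_n) : V \is unitarymx ->
  cd V d *m cd V e = cd V (\row_k (d 0 k * e 0 k)).
Proof.
move=> hV; rewrite !cdE.
have -> : V ^t* *m diag_mx d *m V *m (V ^t* *m diag_mx e *m V) =
  V ^t* *m diag_mx d *m (V *m V ^t*) *m diag_mx e *m V by rewrite !mulmxA.
by rewrite unit_r // mulmx1 -diag_mul mulmxA.
Qed.

Lemma cd_herm n (V : 'M[C]_n) (d : 'rV[C]_n) : (forall k, (d 0 k)^* = d 0 k) ->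
  (cd V d) ^t* = cd V d.
Proof.
move=> hd; rewrite !cdE !trC_mul trmxCK mulmxA; congr (_ *m _ *m _).
rewrite tr_diag_mx map_diag_mx; congr diag_mx.
by apply/rowP => k; rewrite mxE; apply: hd.
Qed.

Lemma row_nrm1 n (V : 'M[C]_n) k : V \is unitarymx ->
  (row k V *m (row k V) ^t*) 0 0 = 1.
Proof. by move/row_unitarymxP => /(_ k k); rewrite dotmxE eqxx. Qed.

Lemma cd_row n (V : 'M[C]_n) (d : 'rV[C]_n) k : V \is unitarymx ->
  row k V *m cd V d = d 0 k *: row k V.
Proof.
move=> hV; rewrite -row_mul cdE !mulmxA unit_r // mul1mx.
by rewrite row_mul row_diag_mx -scalemxAl -rowE.
Qed.

Lemma cd_quad_row n (V : 'M[C]_n) (d : 'rV[C]_n) k : V \is unitarymx ->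
  (row k V *m cd V d *m (row k V) ^t*) 0 0 = d 0 k.
Proof.
by move=> hV; rewrite cd_row // -scalemxAl mxE row_nrm1 // mulr1.
Qed.

Lemma tr_cd n (V : 'M[C]_n) (d : 'rV[C]_n) : V \is unitarymx -> \tr (cd V d) = \sum_k d 0 k.
Proof.
move=> hV; rewrite !cdE mxtrace_mulC mulmxA unit_r // mul1mx mxtrace_diag.
by [].
Qed.

Lemma tr_mul_diag n (B : 'M[C]_n) (l : 'rV[C]_n) :
  \tr (B *m diag_mx l) = \sum_j B j j * l 0 j.
Proof. by rewrite /mxtrace; apply: eq_bigr => j _; rewrite mul_mx_diag mxE. Qed.

Lemma quad_cd n (V : 'M[C]_n) (d : 'rV[C]_n) (u : 'rV[C]_n) :
  (u *m cd V d *m u ^t*) 0 0 = \sum_k d 0 k * `|(u *m V ^t*) 0 k| ^+ 2.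
Proof. by rewrite cdE quad_diag. Qed.

End Aux5.


Section Main.
Local Open Scope sesquilinear_scope.
Variables (C : numClosedFieldType) (n : nat) (A Z : 'M[C]_n) (a b : C).
Hypotheses (hA : psd_mx A) (hZ : pd_mx Z) (ha : eigenvalue Z a)
  (hal : forall l, eigenvalue Z l -> l <= a) (hb : eigenvalue Z b)
  (hbl : forall l, eigenvalue Z l -> b <= l).

Let AH : A ^t* = A := hA.1.
Let ZH : Z ^t* = Z := hZ.1.

Let b_gt0 : 0 < b.
Proof.
case/eigenvalueP: hb => v hv v0.
have := hZ.2 v v0; rewrite hv -scalemxAl mxE.
by rewrite pmulr_lgt0 // nrm_gt0.
Qed.

Let a_gt0 : 0 < a.
Proof. exact: lt_le_trans b_gt0 (hbl ha). Qed.

Let Vz := spectralmx Z.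
Let z := spectral_diag Z.
Let hVz : Vz \is unitarymx := spectral_unitarymx Z.
Let ZE : Z = cd Vz z.
Proof. by rewrite cdE; exact: spec_dec ZH. Qed.

Lemma row_neq0 m (V : 'M[C]_m) k : V \is unitarymx -> row k V != 0.
Proof.
move=> hV; apply/eqP => h; have := row_nrm1 k hV; rewrite h mul0mx mxE.
by move/eqP; rewrite eq_sym oner_eq0.
Qed.

Let z_eig k : eigenvalue Z (z 0 k).
Proof.
apply/eigenvalueP; exists (row k Vz); last exact: row_neq0.
by rewrite {1}ZE cd_row.
Qed.

Let zb k : b <= z 0 k. Proof. exact: hbl (z_eig k). Qed.
Let za k : z 0 k <= a. Proof. exact: hal (z_eig k). Qed.
Let zpos k : 0 < z 0 k. Proof. exact: lt_le_trans b_gt0 (zb k). Qed.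

Let sz : 'rV[C]_n := \row_k sqrtC (z 0 k).
Let tz : 'rV[C]_n := \row_k (sqrtC (z 0 k))^-1.
Let S := cd Vz sz.
Let T := cd Vz tz.

Lemma cd1 m (V : 'M[C]_m) : V \is unitarymx -> cd V (const_mx 1) = 1%:M.
Proof. by move=> hV; rewrite cdE diag_const_mx mulmx1 unit_l. Qed.

Let sz_neq0 k : sqrtC (z 0 k) != 0.
Proof. by rewrite sqrtC_eq0 gt_eqF. Qed.

Let SS : S *m S = Z.
Proof.
rewrite /S cd_mul // ZE; congr cd; apply/rowP => k.
by rewrite !mxE -expr2 sqrtCK.
Qed.

Let ST : S *m T = 1%:M.
Proof.
rewrite /S /T cd_mul // -(cd1 hVz); congr cd; apply/rowP => k.
by rewrite !mxE mulfV.
Qed.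

Let TS : T *m S = 1%:M.
Proof.
rewrite /S /T cd_mul // -(cd1 hVz); congr cd; apply/rowP => k.
by rewrite !mxE mulVf.
Qed.

Let sz_real k : sqrtC (z 0 k) \is Num.real.
Proof. by apply: sqrtC_real; apply: ltW. Qed.

Let SH : S ^t* = S.
Proof. by apply: cd_herm => k; rewrite mxE conj_Creal. Qed.

Let TH : T ^t* = T.
Proof. by apply: cd_herm => k; rewrite mxE conj_Creal // rpredV. Qed.

Let ww (r : 'rV[C]_n) k := `|(r *m Vz ^t*) 0 k| ^+ 2.

Let nrmS (r : 'rV[C]_n) : ((r *m S) *m (r *m S) ^t*) 0 0 = \sum_k z 0 k * ww r k.
Proof.
by rewrite trC_mul SH mulmxA -(mulmxA r) SS {1}ZE quad_cd.
Qed.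

Let nrmT (r : 'rV[C]_n) : ((r *m T) *m (r *m T) ^t*) 0 0 = \sum_k ww r k / z 0 k.
Proof.
rewrite trC_mul TH mulmxA -(mulmxA r) /T cd_mul // quad_cd.
apply: eq_bigr => k _; rewrite mxE mxE -invfM -expr2 sqrtCK mulrC //.
Qed.

Let nrmW (r : 'rV[C]_n) : (r *m r ^t*) 0 0 = \sum_k ww r k.
Proof. exact: nrm_unit. Qed.

Let K := (a + b) / (2 * sqrtC (a * b)).

Let kant (r : 'rV[C]_n) :
  ((r *m S) *m (r *m S) ^t*) 0 0 * ((r *m T) *m (r *m T) ^t*) 0 0 <=
  K ^+ 2 * ((r *m r ^t*) 0 0) ^+ 2.
Proof.
rewrite nrmS nrmT nrmW; apply: sc2 => // k.
by rewrite /ww exprn_ge0.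
Qed.

Let P := S *m A *m S.
Let PH : P ^t* = P.
Proof. by rewrite /P (trC_mul (S *m A) S) (trC_mul S A) SH AH mulmxA. Qed.
Let Wp := spectralmx P.
Let lam := spectral_diag P.
Let hWp : Wp \is unitarymx := spectral_unitarymx P.
Let PE : P = cd Wp lam.
Proof. by rewrite cdE; exact: spec_dec PH. Qed.

Let quadP (r : 'rV[C]_n) : (r *m P *m r ^t*) 0 0 = ((r *m S) *m A *m (r *m S) ^t*) 0 0.
Proof. by rewrite (trC_mul r S) SH /P !mulmxA. Qed.

Let lam_ge0 j : 0 <= lam 0 j.
Proof.
have := cd_quad_row lam j hWp; rewrite -PE quadP => <-.
exact: hA.2.
Qed.

Let AZE : A *m Z = T *m P *m S.
Proof. by rewrite /P -SS !mulmxA TS mul1mx. Qed.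

Let lam_eig j : eigenvalue (A *m Z) (lam 0 j).
Proof.
apply/eigenvalueP; exists (row j Wp *m S).
  have hr : row j Wp *m P = lam 0 j *: row j Wp by rewrite {1}PE cd_row.
  rewrite AZE (mulmxA (row j Wp *m S) (T *m P) S) (mulmxA (row j Wp *m S) T P).
  by rewrite -(mulmxA (row j Wp) S T) ST mulmx1 hr scalemxAl.
apply/eqP => h; have := row_neq0 j hWp.
by rewrite -(mulmx1 (row j Wp)) -ST mulmxA h mul0mx eqxx.
Qed.

Let rho := specrad (A *m Z).

Let rho_ge0 : 0 <= rho.
Proof. exact: bmax_ge0. Qed.

Let lam_le j : lam 0 j <= rho.
Proof.
have := le_bmax (eig_in (lam_eig j)).
by rewrite ger0_norm.
Qed.

Let trAZ : \tr (A *m Z) = \sum_j lam 0 j.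
Proof.
by rewrite AZE mxtrace_mulC (mulmxA S T P) ST mul1mx PE tr_cd.
Qed.

Let K_ge0 : 0 <= K.
Proof.
apply: divr_ge0; first by rewrite addr_ge0 // ltW.
by rewrite mulr_ge0 // sqrtC_ge0 mulr_ge0 // ltW.
Qed.

Let XTS m (X : 'M[C]_(m, n)) : X *m T *m S = X.
Proof. by rewrite -mulmxA TS mulmx1. Qed.
Let XST m (X : 'M[C]_(m, n)) : X *m S *m T = X.
Proof. by rewrite -mulmxA ST mulmx1. Qed.
Let XSS m (X : 'M[C]_(m, n)) : X *m S *m S = X *m Z.
Proof. by rewrite -mulmxA SS. Qed.

Let MH : (A *m Z) ^t* = Z *m A.
Proof. by rewrite trC_mul AH ZH. Qed.
Let MH' : (Z *m A) ^t* = A *m Z.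
Proof. by rewrite trC_mul AH ZH. Qed.

Let PP : P *m P = cd Wp (\row_j (lam 0 j * lam 0 j)).
Proof. by rewrite PE cd_mul. Qed.

Let ZZ : Z *m Z = cd Vz (\row_k (z 0 k * z 0 k)).
Proof. by rewrite ZE cd_mul. Qed.

Let ineqZ (y : 'rV[C]_n) :
  ((y *m Z) *m (y *m Z) ^t*) 0 0 <=
  (a + b) * (y *m Z *m y ^t*) 0 0 - a * b * (y *m y ^t*) 0 0.
Proof.
rewrite (trC_mul y Z) ZH (mulmxA (y *m Z) Z) -(mulmxA y Z Z) ZZ quad_cd.
rewrite ZE quad_cd nrmW !mulr_sumr -sumrB; apply: ler_sum => k _.
rewrite mxE -subr_ge0.
have -> : (a + b) * (z 0 k * ww y k) - a * b * ww y k - z 0 k * z 0 k * ww y k =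
  (a - z 0 k) * (z 0 k - b) * ww y k by rewrite /ww; ring.
by rewrite !mulr_ge0 ?subr_ge0 // /ww exprn_ge0.
Qed.

Let ineqP (w : 'rV[C]_n) :
  ((w *m P) *m (w *m P) ^t*) 0 0 <= rho * (w *m P *m w ^t*) 0 0.
Proof.
rewrite (trC_mul w P) PH (mulmxA (w *m P) P) -(mulmxA w P P) PP quad_cd.
rewrite PE quad_cd mulr_sumr; apply: ler_sum => j _.
rewrite mxE mulrA; apply: ler_wpM2r; first exact: exprn_ge0.
by apply: ler_wpM2r.
Qed.

Lemma op_bound x : x \in eigvals ((A *m Z) ^t* *m (A *m Z)) -> sqrtC x <= K * rho.
Proof.
move=> /in_eig /eigenvalueP [v hv v0].
rewrite MH in hv.
pose u := v *m (Z *m A).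
have hxu : x * (v *m v ^t*) 0 0 = (u *m u ^t*) 0 0.
  have -> : u *m u ^t* = v *m (Z *m A *m (A *m Z)) *m v ^t*.
    by rewrite /u trC_mul MH' !mulmxA.
  by rewrite hv -scalemxAl [in RHS]mxE.
have nv := nrm_gt0 v0.
have hx0 : 0 <= x by rewrite -(pmulr_lge0 _ nv) hxu nrm_ge0.
have Kr0 : 0 <= K * rho by rewrite mulr_ge0.
case: (eqVneq u 0) => [u0 | u0].
  move: hxu; rewrite u0 mul0mx [X in _ = X]mxE => /eqP; rewrite mulf_eq0 (gt_eqF nv) orbF.
  by move/eqP ->; rewrite sqrtC0.
have nu := nrm_gt0 u0.
have huM : u *m (A *m Z) = x *: v by rewrite /u -mulmxA hv.
have e1 : ((u *m A *m Z) *m (u *m A *m Z) ^t*) 0 0 = x * (u *m u ^t*) 0 0.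
  rewrite -(mulmxA u A Z) (trC_mul u (A *m Z)) MH.
  by rewrite (mulmxA (u *m (A *m Z)) (Z *m A)) huM -!scalemxAl -/u [in LHS]mxE.
pose y := u *m A.
pose w := u *m T.
pose t := (u *m A *m u ^t*) 0 0.
have t0 : 0 <= t by apply: hA.2.
have e2 : (y *m Z *m y ^t*) 0 0 = ((w *m P) *m (w *m P) ^t*) 0 0.
  rewrite /y /w (trC_mul (u *m T) P) PH (trC_mul u T) TH (trC_mul u A) AH.
  by rewrite !mulmxA !XTS XSS !XST.
have e3 : (w *m P *m w ^t*) 0 0 = t.
  by rewrite /w /t (trC_mul u T) TH /P !mulmxA !XTS XST.
have cs : t ^+ 2 <= (y *m y ^t*) 0 0 * (u *m u ^t*) 0 0.
  have := (CauchySchwarz (@dotmx C n) y u).1.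
  move=> h; rewrite -[t]ger0_norm // (_ : t = dotmx y u) ?dotmxE // -!dotmxE; exact: h.
have hxt : x <= (K * rho) ^+ 2.
  apply: (sc1 a_gt0 b_gt0 rho_ge0 t0 nu _ cs).
  rewrite -e1; apply: le_trans (ineqZ y) _.
  rewrite lerD2r e2 -mulrA; apply: ler_wpM2l; first by rewrite addr_ge0 // ltW.
  by rewrite -e3; apply: ineqP.
by rewrite -(sqrCK Kr0) ler_sqrtC // nnegrE // exprn_ge0.
Qed.

Lemma CSmx m (u v : 'rV[C]_m) :
  `|(u *m v ^t*) 0 0| ^+ 2 <= (u *m u ^t*) 0 0 * (v *m v ^t*) 0 0.
Proof. have h := (CauchySchwarz (@dotmx C m) u v).1; rewrite -!dotmxE; exact: h. Qed.

Let HH : ((A *m Z) ^t* *m (A *m Z)) ^t* = (A *m Z) ^t* *m (A *m Z).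
Proof. by rewrite trC_mul trmxCK. Qed.
Let Vh := spectralmx ((A *m Z) ^t* *m (A *m Z)).
Let d := spectral_diag ((A *m Z) ^t* *m (A *m Z)).
Let hVh : Vh \is unitarymx := spectral_unitarymx _.
Let HE : (A *m Z) ^t* *m (A *m Z) = cd Vh d.
Proof. by rewrite cdE; exact: spec_dec HH. Qed.

Let d_ge0 k : 0 <= d 0 k.
Proof.
have := cd_quad_row d k hVh; rewrite -HE => <-.
have -> : row k Vh *m ((A *m Z) ^t* *m (A *m Z)) *m (row k Vh) ^t* =
  (row k Vh *m (A *m Z) ^t*) *m (row k Vh *m (A *m Z) ^t*) ^t*.
  by rewrite (trC_mul (row k Vh) _) trmxCK !mulmxA.
exact: nrm_ge0.
Qed.

Lemma eig_perm_cd m (V : 'M[C]_m) (e : 'rV[C]_m) : V \is unitarymx ->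
  perm_eq (eigvals (cd V e)) [seq e 0 k | k <- enum 'I_m].
Proof. by move=> hV; rewrite cdE; apply: eig_perm. Qed.

Let tn : tracenorm (A *m Z) = \sum_k sqrtC (d 0 k).
Proof.
rewrite /tracenorm /singvals big_map HE (perm_big _ (eig_perm_cd d hVh)).
by rewrite big_map big_enum.
Qed.

Let g : 'rV[C]_n := \row_k (if d 0 k == 0 then 0 else (sqrtC (d 0 k))^-1).
Let G := cd Vh g.
Let GH : G ^t* = G.
Proof.
apply: cd_herm => k; rewrite mxE; case: ifP => _; first by rewrite conjC0.
by rewrite conj_Creal // rpredV sqrtC_real.
Qed.

Let X := G *m (A *m Z) ^t*.

Let trXM : \tr (X *m (A *m Z)) = \sum_k sqrtC (d 0 k).
Proof.
rewrite /X -mulmxA HE /G cd_mul // tr_cd //; apply: eq_bigr => k _.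
rewrite mxE mxE; case: eqP => [->|/eqP dn0]; first by rewrite mul0r sqrtC0.
have sn0 : sqrtC (d 0 k) != 0 by rewrite sqrtC_eq0.
by rewrite -{2}(sqrtCK (d 0 k)) expr2 mulrA mulVf // mul1r.
Qed.

Let contr (p r : 'rV[C]_n) :
  `|(p *m X *m r ^t*) 0 0| ^+ 2 <= (p *m p ^t*) 0 0 * (r *m r ^t*) 0 0.
Proof.
apply: le_trans (CSmx (p *m X) r) _; apply: ler_wpM2r; first exact: nrm_ge0.
have -> : p *m X *m (p *m X) ^t* = p *m (G *m ((A *m Z) ^t* *m (A *m Z)) *m G) *m p ^t*.
  by rewrite /X (trC_mul p (G *m _)) (trC_mul G _) trmxCK GH !mulmxA.
rewrite HE /G !cd_mul // quad_cd (nrm_unit p hVh); apply: ler_sum => k _.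
rewrite !mxE; case: eqP => [_|/eqP dn0]; first by rewrite !mul0r exprn_ge0.
have sn0 : sqrtC (d 0 k) != 0 by rewrite sqrtC_eq0.
by rewrite -{2}(sqrtCK (d 0 k)) expr2 mulrA mulVf // mul1r mulfV // mul1r.
Qed.

Lemma tr_bound : tracenorm (A *m Z) <= K * \tr (A *m Z).
Proof.
pose B := S *m X *m T.
have E1 : \tr (X *m (A *m Z)) = \sum_j (Wp *m B *m Wp ^t*) j j * lam 0 j.
  rewrite -tr_mul_diag AZE (mulmxA X (T *m P) S) mxtrace_mulC (mulmxA X T P).
  rewrite (mulmxA S (X *m T) P) (mulmxA S X T) -/B PE cdE.
  rewrite (mulmxA B (Wp ^t* *m diag_mx lam) Wp) mxtrace_mulC.
  by rewrite (mulmxA B (Wp ^t*) (diag_mx lam)) (mulmxA Wp (B *m Wp ^t*) (diag_mx lam)) (mulmxA Wp B (Wp ^t*)).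
have ej j : `|(Wp *m B *m Wp ^t*) j j| <= K.
  rewrite entry_rows.
  have -> : row j Wp *m B *m (row j Wp) ^t* = (row j Wp *m S) *m X *m (row j Wp *m T) ^t*.
    by rewrite (trC_mul (row j Wp) T) TH /B !mulmxA.
  rewrite -(ler_pXn2r (n := 2)) // ?nnegrE //.
  apply: le_trans (contr _ _) _; apply: le_trans (kant _) _.
  by rewrite row_nrm1 // expr1n mulr1.
have s0 : 0 <= \sum_k sqrtC (d 0 k) by apply: sumr_ge0 => k _; rewrite sqrtC_ge0.
rewrite tn trAZ -(ger0_norm s0) -trXM E1; apply: le_trans (ler_norm_sum _ _ _) _.
rewrite mulr_sumr; apply: ler_sum => j _.
by rewrite normrM (ger0_norm (lam_ge0 j)) ler_wpM2r.
Qed.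

End Main.

Unset Implicit Arguments.
Set Strict Implicit.

Theorem corollary1p4 (R : rcfType) (n : nat) (A Z : 'M[R[i]]_n) (a b : R[i]) :
  psd_mx A -> pd_mx Z ->
  eigenvalue Z a -> (forall l, eigenvalue Z l -> l <= a) ->
  eigenvalue Z b -> (forall l, eigenvalue Z l -> b <= l) ->
  opnorm (A *m Z) <= (a + b) / (2 * sqrtC (a * b)) * specrad (A *m Z) /\
  tracenorm (A *m Z) <= (a + b) / (2 * sqrtC (a * b)) * \tr (A *m Z).
Proof.
move=> hA hZ ha hal hb hbl; split; last first.
  have h := tr_bound hA hZ ha hal hb hbl. exact: h.
rewrite /opnorm. apply: bmax_le.
  move=> s /mapP [x hx ->]. have h := op_bound hA hZ ha hal hb hbl hx. exact: h.
have b0 : 0 < b.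
  case/eigenvalueP: hb => v hv v0.
  have := hZ.2 v v0; rewrite hv -scalemxAl mxE.
  by rewrite pmulr_lgt0 // nrm_gt0.
have a0 : 0 < a by apply: lt_le_trans b0 (hbl _ ha).
apply: mulr_ge0; last by rewrite /specrad; exact: bmax_ge0.
apply: divr_ge0; first by rewrite addr_ge0 // ltW.
by rewrite mulr_ge0 // sqrtC_ge0 mulr_ge0 // ltW.
Qed.
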